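(* A set system $H=(U,(A_1,\dots,A_m))$ is harmonic if and only if its complement $\overline H=(U,(U\setminus A_1,\dots,U\setminus A_m))$ is harmonic.
   Context: For $I\subseteq[m]$, $H_I=\bigcap_{i\in I}A_i$ ($=U$ if $I=\emptyset$). The run decomposition of a finite set $I$ of positive integers is the partition formed by the sizes, in nonincreasing order, of the maximal runs of consecutive integers in $I$. $H$ is harmonic if $|H_I|=|H_J|$ whenever $I,J\subseteq[m]$ have the same run decomposition. *)

(* Defs.v *)
From mathcomp Require Import all_boot.
Set Implicit Arguments. Unset Strict Implicit. Unset Printing Implicit Defensive.

(* A set system H = (U, (A_1,...,A_m)): U is a finite type (the universe),
   A : 'I_m -> {set U}; index i : 'I_m stands for the integer i+1 of [m]. *)

Definition HI (U : finType) (m : nat) (A : 'I_m -> {set U}) (I : {set 'I_m})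
  : {set U} := \bigcap_(i in I) A i.

Definition natin (m : nat) (I : {set 'I_m}) (n : nat) : bool :=
  [exists i in I, val i == n].

(* a starts a maximal run of I: a in I and a-1 not in I (a = 0 is integer 1). *)
Definition run_start (m : nat) (I : {set 'I_m}) (a : 'I_m) : bool :=
  (a \in I) && ((val a == 0) || ~~ natin I (val a).-1).

Definition run_length (m : nat) (I : {set 'I_m}) (a : 'I_m) : nat :=
  #|[set j : 'I_m | (a <= j) &&
       [forall k : 'I_m, ((a <= k) && (k <= j)) ==> (k \in I)]]|.

Definition run_decomposition (m : nat) (I : {set 'I_m}) : seq nat :=
  sort geq [seq run_length I a | a <- enum [set a | run_start I a]].

Definition harmonic (U : finType) (m : nat) (A : 'I_m -> {set U}) : Prop :=
  forall I J : {set 'I_m},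
    run_decomposition I = run_decomposition J -> #|HI A I| = #|HI A J|.

Definition complement_system (U : finType) (m : nat) (A : 'I_m -> {set U})
  : 'I_m -> {set U} := fun i => ~: A i.

(* Main.v *)
Require Import Defs.
From mathcomp Require Import all_boot all_order all_algebra zify.
Set Implicit Arguments. Unset Strict Implicit. Unset Printing Implicit Defensive.

Section Runs.
Variable m : nat.
Implicit Types (X Y I J : {set 'I_m}) (a b j k x y : 'I_m).

Definition adj x y : bool := nat_of_ord y == (nat_of_ord x).+1.

Definition runset X a : {set 'I_m} :=
  [set j : 'I_m | (a <= j) &&
       [forall k : 'I_m, ((a <= k) && (k <= j)) ==> (k \in X)]].

Lemma run_lengthE X a : run_length X a = #|runset X a|.
Proof. by []. Qed.

Lemma run_startE X a :
  run_start X a = (a \in X) && ~~ [exists b in X, adj b a].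
Proof.
rewrite /run_start /natin; congr (_ && _).
case: a => [[|n] Hn] /=.
  by apply/esym/negP; case/existsP => b /andP[_ /eqP].
congr negb; apply: eq_existsb => b; rewrite /adj /= eqSS eq_sym.
by [].
Qed.

Lemma runsetP X a j : (j \in runset X a) =
  ((j == a) && (a \in X)) || [exists j0 in runset X a, adj j0 j && (j \in X)].
Proof.
apply/idP/idP.
  rewrite inE => /andP[aj /forallP H].
  have jX : j \in X by apply: (implyP (H j)); rewrite aj leqnn.
  case: (eqVneq j a) => [E|ne]; first by subst j; rewrite jX.
  have jpos : j.-1 < m by apply: leq_ltn_trans (leq_pred j) (ltn_ord j).
  apply/orP; right; apply/existsP; exists (Ordinal jpos).
  have aj' : a < j by rewrite ltn_neqAle aj andbT; apply/eqP => /val_inj E; rewrite E eqxx in ne.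
  have hj : (j.-1).+1 = j := prednK (leq_ltn_trans (leq0n a) aj').
  rewrite inE /= jX andbT /adj /=; apply/andP; split; first (apply/andP; split).
  - by apply/leP; lia.
  - apply/forallP => k; apply/implyP => /andP[ak kj]; apply: (implyP (H k)).
    by rewrite ak /=; lia.
  - by apply/eqP; lia.
case/orP => [/andP[/eqP -> aX] | /existsP[j0 /andP[]]].
  rewrite inE leqnn /=; apply/forallP => k; apply/implyP => /andP[ak ka].
  by have -> : k = a by apply: val_inj; apply/eqP; rewrite eqn_leq ka ak.
rewrite inE => /andP[aj0 /forallP H0] /andP[/eqP adjj jX].
rewrite inE; apply/andP; split; first by lia.
apply/forallP => k; apply/implyP => /andP[ak kj].
case: (leqP k j0) => kj0; first by apply: (implyP (H0 k)); rewrite ak kj0.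
  by have -> : k = j by apply: val_inj => /=; lia.
Qed.

Lemma runset_sub X a : runset X a \subset X.
Proof.
apply/subsetP => j; rewrite inE => /andP[aj /forallP H].
by apply: (implyP (H j)); rewrite aj leqnn.
Qed.

Lemma runset_a X a : a \in X -> a \in runset X a.
Proof. by move=> aX; rewrite runsetP eqxx aX. Qed.

Lemma runset_ge X a j : j \in runset X a -> a <= j.
Proof. by rewrite inE => /andP[]. Qed.

Lemma runset_fwd X a j j' : j \in runset X a -> adj j j' -> j' \in X ->
  j' \in runset X a.
Proof.
move=> jR ad jX; rewrite runsetP; apply/orP; right.
by apply/existsP; exists j; rewrite jR ad jX.
Qed.

Lemma runset_bwd X a j j' : run_start X a -> j' \in runset X a -> adj j j' ->
  j \in X -> j \in runset X a.
Proof.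
rewrite run_startE => /andP[aX nex]; rewrite runsetP.
case/orP => [/andP[/eqP -> _] | /existsP[j0 /andP[j0R /andP[ad0 _]]]] ad jX.
  by case/negP: nex; apply/existsP; exists j; rewrite jX ad.
have -> : j = j0 by apply: val_inj; move: ad ad0; rewrite /adj => /eqP -> /eqP [].
exact: j0R.
Qed.

Lemma runset_mono X Y a : X \subset Y -> runset X a \subset runset Y a.
Proof.
move=> /subsetP sXY; apply/subsetP => j; rewrite !inE => /andP[-> /forallP H] /=.
apply/forallP => k; apply/implyP => kk; exact: sXY (implyP (H k) kk).
Qed.

Lemma runset_ind X a (P : 'I_m -> Prop) :
  (a \in X -> P a) ->
  (forall j0 j, j0 \in runset X a -> P j0 -> adj j0 j -> j \in X -> P j) ->
  forall j, j \in runset X a -> P j.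
Proof.
move=> Ha Hs j Hj; move Hn: (nat_of_ord j - nat_of_ord a) => n.
elim: n j Hj Hn => [|n IH] j Hj Hn; move: (Hj); rewrite runsetP;
  case/orP => [/andP[/eqP -> aX] | /existsP[j0 /andP[j0R /andP[ad jX]]]];
  try exact: Ha.
- have := runset_ge j0R; move: ad Hn; rewrite /adj => /eqP; lia.
- apply: (Hs j0) => //; apply: IH => //.
  move: ad Hn; rewrite /adj => /eqP; have := runset_ge j0R; lia.
Qed.

End Runs.

Section Runs2.
Variable m : nat.
Implicit Types (X Y I J : {set 'I_m}) (a b j k x y : 'I_m).

Definition ivl (lo hi : nat) : {set 'I_m} := [set j : 'I_m | lo <= j < hi].

Lemma card_ivl lo hi : hi <= m -> #|ivl lo hi| = hi - lo.
Proof.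
elim: hi => [|h IH] hm.
  by apply/eqP; rewrite cards_eq0; apply/eqP/setP => j; rewrite !inE ltn0 andbF.
case: (ltnP h lo) => hl.
  have -> : ivl lo h.+1 = set0.
    by apply/setP => j; rewrite !inE; apply/negbTE/negP => /andP[]; lia.
  by rewrite cards0; lia.
have hm' : h < m by lia.
have -> : ivl lo h.+1 = Ordinal hm' |: ivl lo h.
  apply/setP => j; rewrite !inE; apply/idP/idP.
    move=> /andP[lj jh]; case: (ltnP j h) => jh'; first by apply/orP; right; apply/andP; split.
    by apply/orP; left; apply/eqP/val_inj => /=; lia.
  by case/orP => [/eqP -> /= | /andP[]]; lia.
rewrite cardsU1 IH; last by lia.
by rewrite !inE /= ltnn andbF; lia.
Qed.

Lemma runset_ivl X a : a \in X -> exists e, [/\ a < e, e <= m & runset X a = ivl a e].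
Proof.
move=> aX.
pose P n := (a < n) && ((m <= n) || [forall j : 'I_m, (nat_of_ord j == n) ==> (j \notin X)]).
have exP : exists n, P n by exists m; rewrite /P ltn_ord leqnn.
case: (ex_minnP exP) => e /andP[ae He] Hmin.
have em : e <= m by apply: Hmin; rewrite /P ltn_ord leqnn.
exists e; split => //; apply/setP => j; rewrite !inE.
apply/idP/idP.
  move=> /andP[aj /forallP H]; rewrite aj /=.
  case: (ltnP j e) => // ej.
  have em' : e < m by have := ltn_ord j; lia.
  move: He; rewrite leqNgt em' /= => /forallP /(_ (Ordinal em')) /=.
  rewrite eqxx /= => /negP []; apply: (implyP (H _)) => /=; lia.
move=> /andP[aj je]; rewrite aj /=; apply/forallP => k; apply/implyP => /andP[ak kj].
case: (eqVneq k a) => [-> //|kna].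
have ak' : a < k by rewrite ltn_neqAle ak andbT; apply/eqP => E; rewrite (val_inj E) eqxx in kna.
case kX: (k \in X) => //.
have : P k.
  rewrite /P ak' /=; apply/orP; right; apply/forallP => k'; apply/implyP => /eqP E.
  by rewrite (val_inj E) kX.
move/Hmin; lia.
Qed.

Lemma runlen_pos X a : a \in X -> 0 < run_length X a.
Proof. by move=> aX; rewrite run_lengthE; apply/card_gt0P; exists a; apply: runset_a. Qed.

Lemma translate X Y a b : a \in X -> b \in Y -> run_length X a = run_length Y b ->
  exists t : 'I_m -> 'I_m,
    [/\ {in runset X a &, injective t}, t @: runset X a = runset Y b &
        {in runset X a &, forall x y, adj (t x) (t y) = adj x y}].
Proof.
move=> aX bY; rewrite !run_lengthE.
case: (runset_ivl aX) => e [ae em ->]; case: (runset_ivl bY) => e' [be em' ->].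
rewrite !card_ivl // => El.
pose t (x : 'I_m) := insubd x (x - a + b).
have tv x : x \in ivl a e -> nat_of_ord (t x) = x - a + b.
  rewrite inE => /andP[ax xe]; rewrite /t val_insubd.
  by have -> : x - a + b < m by lia.
exists t; split.
- move=> x y xi yi /(congr1 val) /=; rewrite !tv //.
  move: xi yi; rewrite !inE => /andP[ax _] /andP[ay _] E; apply: val_inj => /=; lia.
- apply/setP => y; apply/imsetP/idP.
    case=> x xi ->; rewrite inE tv //; move: xi; rewrite inE; lia.
  rewrite inE => /andP[by' ye].
  have ym : y - b + a < m by lia.
  exists (Ordinal ym); first by rewrite inE /=; lia.
  by apply: val_inj => /=; rewrite tv /=; [lia | rewrite inE /=; lia].
- move=> x y xi yi; rewrite /adj !tv //; move: xi yi; rewrite !inE => /andP[ax _] /andP[ay _].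
  by apply/eqP/eqP; lia.
Qed.

Lemma exists_run_start X : X != set0 -> exists a, run_start X a.
Proof.
case/set0Pn => x0 x0X.
case: (arg_minnP (fun i : 'I_m => nat_of_ord i) x0X) => a aX Hmin.
have aX' : a \in X by [].
exists a; rewrite run_startE aX' /=; apply/negP => /existsP[b /andP[bX /eqP E]].
by have := Hmin b bX; lia.
Qed.

End Runs2.

Section Runs3.
Variable m : nat.
Implicit Types (X Y I J S : {set 'I_m}) (a b j k x y : 'I_m).

Definition rdl X := [seq run_length X a | a <- enum [set a | run_start X a]].

Lemma perm_enum_imset (f : 'I_m -> 'I_m) S : {in S &, injective f} ->
  perm_eq (enum (f @: S)) (map f (enum S)).
Proof.
move=> inj; apply: uniq_perm; first exact: enum_uniq.
  rewrite map_inj_in_uniq ?enum_uniq // => x y; rewrite !mem_enum; exact: inj.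
move=> y; rewrite mem_enum; apply/imsetP/mapP => [[x xS ->]|[x xS ->]];
  by exists x; rewrite ?mem_enum in xS *.
Qed.

Lemma perm_enum_setU1 a S : a \notin S -> perm_eq (enum (a |: S)) (a :: enum S).
Proof.
move=> aS; apply: uniq_perm; first exact: enum_uniq.
  by rewrite /= mem_enum aS enum_uniq.
by move=> y; rewrite mem_enum in_setU1 in_cons mem_enum.
Qed.

Lemma transport I (s : 'I_m -> 'I_m) J : {in I &, injective s} ->
  {in I &, forall x y, adj (s x) (s y) = adj x y} -> J \subset I ->
  perm_eq (rdl (s @: J)) (rdl J).
Proof.
move=> inj hadj /subsetP JI.
have injJ : {in J &, injective s} by move=> x y xJ yJ; apply: inj; apply: JI.
have memJ a : a \in I -> (s a \in s @: J) = (a \in J).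
  move=> aI; apply/imsetP/idP => [[b bJ E]|aJ]; last by exists a.
  by rewrite (inj a b aI (JI b bJ) E).
have rsE a : a \in I -> run_start (s @: J) (s a) = run_start J a.
  move=> aI; rewrite !run_startE memJ //; congr (_ && ~~ _).
  apply/existsP/existsP => [[b' /andP[/imsetP[b bJ ->] ad]]|[b /andP[bJ ad]]].
    by exists b; rewrite bJ /= -(hadj b a) // JI.
  by exists (s b); rewrite imset_f //= (hadj b a) // JI.
have rsetE a : a \in J -> runset (s @: J) (s a) = s @: runset J a.
  move=> aJ; apply/eqP; rewrite eqEsubset; apply/andP; split; apply/subsetP.
    apply: runset_ind => [_|j0 j' _ /imsetP[j0' j0R ->] ad j'J].
      by rewrite imset_f // runset_a.
    case/imsetP: j'J => j1 j1J E; subst j'.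
    have j0J := subsetP (runset_sub J a) _ j0R.
    have ad' : adj j0' j1 by rewrite -(hadj j0' j1) // JI.
    by rewrite imset_f //; apply: (runset_fwd j0R ad' j1J).
  move=> y /imsetP[x xR ->].
  apply: (@runset_ind _ J a (fun x => s x \in runset (s @: J) (s a))) => //.
    by move=> _; apply: runset_a; rewrite imset_f.
  move=> j0 j j0R H ad jJ; apply: runset_fwd H _ _; last by rewrite imset_f.
  have j0J := subsetP (runset_sub J a) _ j0R.
  by rewrite hadj // JI.
have starts : [set b | run_start (s @: J) b] = s @: [set a | run_start J a].
  apply/setP => b; rewrite inE; apply/idP/imsetP.
    move=> H; have := H; rewrite run_startE => /andP[/imsetP[a aJ E] _]; subst b.
    by exists a => //; rewrite inE -rsE // JI.
  case=> a; rewrite inE => H ->.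
  have aJ : a \in J by move: H; rewrite run_startE => /andP[].
  by rewrite rsE // JI.
rewrite /rdl starts.
have injS : {in [set a | run_start J a] &, injective s}.
  move=> x y; rewrite !inE !run_startE => /andP[xJ _] /andP[yJ _]; exact: injJ.
apply: perm_trans (perm_map _ (perm_enum_imset injS)) _; rewrite -map_comp.
have -> : map (run_length (s @: J) \o s) (enum [set a | run_start J a]) =
          map (run_length J) (enum [set a | run_start J a]).
  apply/eq_in_map => a; rewrite mem_enum inE run_startE => /andP[aJ _] /=.
  rewrite !run_lengthE rsetE // card_in_imset //.
  move=> x y xR yR; apply: injJ; exact: (subsetP (runset_sub J a)).
exact: perm_refl.
Qed.

Lemma rdl_remove X a : run_start X a ->
  perm_eq (rdl X) (run_length X a :: rdl (X :\: runset X a)).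
Proof.
move=> Ha; set R := runset X a; set X0 := X :\: R.
have aX : a \in X by move: Ha; rewrite run_startE => /andP[].
have aR : a \in R by apply: runset_a.
have starts : [set c | run_start X c] = a |: [set c | run_start X0 c].
  apply/setP => c; rewrite in_setU1 !inE.
  case: (eqVneq c a) => [->|ne] /=; first by rewrite Ha.
  rewrite !run_startE in_setD.
  case cR: (c \in R) => /=.
    have : [exists b in X, adj b c].
      move: cR; rewrite /R runsetP (negbTE ne) /= => /existsP[j0 /andP[j0R /andP[ad _]]].
      apply/existsP; exists j0; rewrite ad andbT.
      exact: (subsetP (runset_sub X a)).
    by move=> ->; rewrite andbF.
  case cX: (c \in X) => //=; congr negb.
  apply/existsP/existsP => [[b /andP[bX ad]]|[b /andP[]]].
    exists b; rewrite ad andbT inE bX andbT; apply/negP => bR.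
    by rewrite /R (runset_fwd bR ad cX) in cR.
  by rewrite inE => /andP[_ bX] ad; exists b; rewrite bX ad.
have aS : a \notin [set c | run_start X0 c].
  by rewrite inE run_startE inE aR.
rewrite /rdl starts; apply: perm_trans (perm_map _ (perm_enum_setU1 aS)) _.
rewrite /= perm_cons.
have -> : map (run_length X) (enum [set c | run_start X0 c]) =
          map (run_length X0) (enum [set c | run_start X0 c]).
  apply/eq_in_map => c; rewrite mem_enum inE => Hc.
  have cX0 : c \in X0 by move: Hc; rewrite run_startE => /andP[].
  have X0X : X0 \subset X by apply: subsetDl.
  rewrite !run_lengthE; suff -> : runset X c = runset X0 c by [].
  apply/eqP; rewrite eqEsubset (runset_mono c X0X) andbT.
  apply/subsetP; apply: runset_ind => [_|j0 j j0R H ad jX]; first exact: runset_a.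
  have jX0 : j \in X0.
    rewrite inE jX andbT; apply/negP => jR.
    have j0X : j0 \in X by apply: (subsetP (runset_sub X c)).
    have := runset_bwd Ha jR ad j0X.
    by have := subsetP (runset_sub X0 c) _ H; rewrite inE => /andP[/negP nR _].
  exact: (runset_fwd H ad jX0).
exact: perm_refl.
Qed.

End Runs3.

Section Runs4.
Variable m : nat.
Implicit Types (X Y I J S : {set 'I_m}) (a b j k x y : 'I_m).

Lemma rdl_nil X : rdl X = [::] -> X = set0.
Proof.
case: (eqVneq X set0) => // /exists_run_start [a Ha].
move/(congr1 size); rewrite size_map -cardE => /eqP; rewrite cards_eq0.
by move/eqP/setP/(_ a); rewrite !inE Ha.
Qed.

Lemma rdl_set0 : rdl (set0 : {set 'I_m}) = [::].
Proof.
rewrite /rdl; have -> : [set a | run_start (set0 : {set 'I_m}) a] = set0.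
  by apply/setP => a; rewrite !inE run_startE inE.
by rewrite enum_set0.
Qed.

Definition good I I' (s : 'I_m -> 'I_m) :=
  [/\ {in I &, injective s}, s @: I = I' &
      {in I &, forall x y, adj (s x) (s y) = adj x y}].

Lemma match0 I' : perm_eq (rdl (set0 : {set 'I_m})) (rdl I') -> exists s, good (set0 : {set 'I_m}) I' s.
Proof.
rewrite rdl_set0 => /perm_size /= /esym /size0nil /rdl_nil ->.
exists id; split; by [move=> x y; rewrite inE | rewrite imset0 | move=> x y; rewrite inE].
Qed.

Lemma match_sets n I I' : #|I| <= n -> perm_eq (rdl I) (rdl I') ->
  exists s, good I I' s.
Proof.
elim: n I I' => [|n IH] I I' HI Hp.
  by move: HI Hp; rewrite leqn0 cards_eq0 => /eqP ->; apply: match0.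
case: (eqVneq I set0) => [E|Ine]; first by move: Hp; rewrite E; apply: match0.
case/exists_run_start: Ine => a Ha.
have aI : a \in I by move: Ha; rewrite run_startE => /andP[].
have : run_length I a \in rdl I' by rewrite -(perm_mem Hp); apply: map_f; rewrite mem_enum inE.
case/mapP => b; rewrite mem_enum inE => Hb El.
have bI' : b \in I' by move: Hb; rewrite run_startE => /andP[].
set R := runset I a; set R' := runset I' b.
have Hp0 : perm_eq (rdl (I :\: R)) (rdl (I' :\: R')).
  have H1 := rdl_remove Ha; have H2 := rdl_remove Hb; rewrite perm_sym in H1.
  have := perm_trans H1 (perm_trans Hp H2).
  by rewrite El perm_cons.
have card0 : #|I :\: R| <= n.
  have : 0 < #|I :&: R| by apply/card_gt0P; exists a; rewrite inE aI runset_a.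
  by move: HI; rewrite cardsD; lia.
case: (IH _ _ card0 Hp0) => s0 [inj0 img0 adj0].
case: (translate aI bI' El) => t [injt imgt adjt].
have RI : R \subset I by apply: runset_sub.
have RI' : R' \subset I' by apply: runset_sub.
have tR x : x \in R -> t x \in R' by move=> xR; rewrite /R' -imgt imset_f.
have s0X x : x \in I :\: R -> s0 x \in I' :\: R' by move=> xX; rewrite -img0 imset_f.
pose s x := if x \in R then t x else s0 x.
exists s; split.
- move=> x y xI yI; rewrite /s; case xR: (x \in R); case yR: (y \in R).
  + exact: injt.
  + move=> E; have := s0X y; rewrite inE yR yI -E => /(_ isT); rewrite inE tR //.
  + move=> E; have := s0X x; rewrite inE xR xI E => /(_ isT); rewrite inE tR //.
  + by apply: inj0; rewrite inE ?xR ?yR ?xI ?yI.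
- apply/setP => y; apply/imsetP/idP.
    case=> x xI ->; rewrite /s; case: ifP => xR.
      exact: (subsetP RI') (tR x xR).
    by have := s0X x; rewrite inE xR xI => /(_ isT); rewrite inE => /andP[].
  move=> yI'; case yR': (y \in R').
    move: yR'; rewrite /R' -imgt => /imsetP[x xR ->]; exists x; last by rewrite /s xR.
    exact: (subsetP RI).
  have : y \in I' :\: R' by rewrite inE yR' yI'.
  rewrite -img0 => /imsetP[x]; rewrite inE => /andP[xR xI] ->; exists x => //.
  by rewrite /s (negbTE xR).
- move=> x y xI yI; rewrite /s; case xR: (x \in R); case yR: (y \in R).
  + exact: adjt.
  + have := s0X y; rewrite inE yR yI => /(_ isT); rewrite inE => /andP[yR' yI'].
    case ad: (adj x y); first by rewrite /R (runset_fwd xR ad yI) in yR.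
    apply/negbTE/negP => ad'; move: yR'; rewrite /R' (runset_fwd (tR x xR) ad' yI') //.
  + have := s0X x; rewrite inE xR xI => /(_ isT); rewrite inE => /andP[xR' xI'].
    case ad: (adj x y); first by rewrite /R (runset_bwd Ha yR ad xI) in xR.
    apply/negbTE/negP => ad'; move: xR'; rewrite /R' (runset_bwd Hb (tR y yR) ad' xI') //.
  + by apply: adj0; rewrite inE ?xR ?yR ?xI ?yI.
Qed.

End Runs4.
Import GRing.Theory Num.Theory.
Section IE.
Local Open Scope ring_scope.

Lemma ind_bigcap (U : finType) m (B : 'I_m -> {set U}) (J : {set 'I_m}) u :
  \prod_(i in J) ((u \in B i)%:R : int) = (u \in \bigcap_(i in J) B i)%:R.
Proof.
case: (boolP (u \in \bigcap_(i in J) B i)) => H.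
  by move/bigcapP: H => H; rewrite big1 // => i iJ; rewrite H.
have [i iJ uB] : exists2 i, i \in J & u \notin B i.
  case: (boolP [exists i in J, u \notin B i]) => [/exists_inP //|/exists_inPn H'].
  by case/negP: H; apply/bigcapP => i iJ; have := H' i iJ; rewrite negbK.
by rewrite (bigD1 i) //= (negbTE uB) mul0r.
Qed.

Lemma card_int (U : finType) (S : {set U}) :
  (#|S|%:R : int) = \sum_u (u \in S)%:R.
Proof.
rewrite -sum1_card natr_sum big_mkcond /=; apply: eq_bigr => u _.
by case: (u \in S).
Qed.

Lemma incl_excl (U : finType) m (A : 'I_m -> {set U}) (I : {set 'I_m}) :
  (#|HI (complement_system A) I|%:R : int) =
  \sum_(J : {set 'I_m} | J \subset I) (-1) ^+ #|J| * (#|HI A J|%:R).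
Proof.
rewrite card_int.
transitivity (\sum_u \sum_(J : {set 'I_m} | J \subset I)
                 (-1) ^+ #|J| * ((u \in HI A J)%:R : int)).
  apply: eq_bigr => u _.
  rewrite /HI -ind_bigcap big_mkcond /=.
  transitivity (\prod_i ((if i \in I then - ((u \in A i)%:R : int) else 0) + 1)).
    apply: eq_bigr => i _; rewrite /complement_system inE.
    by case: (i \in I); case: (u \in A i); rewrite /= ?addNr ?add0r.
  rewrite bigA_distr (bigID (fun J : {set 'I_m} => J \subset I)) /=.
  rewrite [X in _ + X]big1 ?addr0; last first.
    move=> J /subsetPn [i iJ iI].
    by rewrite (bigD1 i) //= iJ (negbTE iI) mul0r.
  apply: eq_bigr => J JI; rewrite -ind_bigcap -prodrN.
  rewrite (bigID (fun i => i \in J)) /= [X in _ * X]big1 ?mulr1; last first.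
    by move=> i /negbTE ->.
  apply: eq_bigr => i iJ; rewrite iJ (subsetP JI i iJ) //.
rewrite exchange_big /=; apply: eq_bigr => J _.
by rewrite card_int mulr_sumr.
Qed.
End IE.

Lemma geq_total' : total geq. Proof. by move=> x y; rewrite /= orbC leq_total. Qed.
Lemma geq_trans' : transitive geq. Proof. by move=> a b c /= H1 H2; apply: leq_trans H2 H1. Qed.
Lemma geq_anti' : antisymmetric geq. Proof. by move=> x y /= H; apply: anti_leq; rewrite andbC. Qed.

Lemma rd_perm m (I J : {set 'I_m}) :
  (run_decomposition I = run_decomposition J) <-> perm_eq (rdl I) (rdl J).
Proof.
split => H.
  by apply/(perm_sortP geq_total' geq_trans' geq_anti').
by apply/(perm_sortP geq_total' geq_trans' geq_anti').
Qed.

Lemma harm_compl (U : finType) (m : nat) (A : 'I_m -> {set U}) :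
  harmonic A -> harmonic (complement_system A).
Proof.
move=> hA I I' /rd_perm Hp.
apply/eqP; rewrite -(eqr_nat int) !incl_excl; apply/eqP.
case: (match_sets (leqnn #|I|) Hp) => s [inj img hadj].
set F := fun J : {set 'I_m} => ((-1) ^+ #|J| * (#|HI A J|%:R) : int)%R.
have injP : {in [set J : {set 'I_m} | J \subset I] &, injective (fun J : {set 'I_m} => s @: J)}.
  move=> J1 J2; rewrite !inE => /subsetP J1I /subsetP J2I E.
  apply/setP => x; apply/idP/idP => xJ.
    have : s x \in s @: J2 by rewrite -E imset_f.
    by case/imsetP => y yJ /inj -> //; [apply: J1I | apply: J2I].
  have : s x \in s @: J1 by rewrite E imset_f.
  by case/imsetP => y yJ /inj -> //; [apply: J2I | apply: J1I].
have PE : [set J : {set 'I_m} | J \subset I'] =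
          (fun J : {set 'I_m} => s @: J) @: [set J : {set 'I_m} | J \subset I].
  apply/setP => J'; rewrite inE; apply/idP/imsetP.
    move=> /subsetP J'I'; exists (I :&: s @^-1: J').
      by rewrite inE subsetIl.
    apply/setP => y; apply/idP/imsetP.
      move=> yJ'; have : y \in s @: I by rewrite img J'I'.
      by case/imsetP => x xI Ey; exists x; rewrite // inE xI inE -Ey.
    by case=> x; rewrite !inE => /andP[_ xJ] ->.
  case=> J; rewrite inE => JI ->; rewrite -img; exact: imsetS.
transitivity (\sum_(J in [set J : {set 'I_m} | J \subset I']) F J)%R; last first.
  by apply: eq_bigl => J; rewrite inE.
rewrite PE big_imset //=.
rewrite [RHS](_ : _ = \sum_(J in [set J : {set 'I_m} | J \subset I]) F J)%R; last first.
  apply: congr_big => [//|J|J]; first by [].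
  rewrite inE => JI; rewrite /F.
  have JI' := subsetP JI.
  rewrite card_in_imset; last by move=> x y xJ yJ; apply: inj; apply: JI'.
  congr (_ * _)%R; congr (_%:R)%R.
  apply: hA; apply/rd_perm; exact: transport hadj JI.
by apply: congr_big => [//|J|J //]; rewrite inE.
Qed.

Theorem corollary3p23 (U : finType) (m : nat) (A : 'I_m -> {set U}) :
  harmonic A <-> harmonic (complement_system A).
Proof.
split; first exact: harm_compl.
move/harm_compl => H I J E.
have CC : forall K, HI (complement_system (complement_system A)) K = HI A K.
  by move=> K; apply: eq_bigr => i _; rewrite /complement_system setCK.
by rewrite -!CC; apply: H.
Qed.
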